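(* The representativity metrics $\rho_1$ and $\rho_\infty$, viewed as set functions $\mathbf{S} \mapsto \rho_1(d)$ and $\mathbf{S}\mapsto\rho_\infty(d)$ on (nonempty) summaries $\mathbf{S}\subseteq\mathbf{W}$ for a fixed workload $\mathbf{W}$ and target distribution $d$, are in general neither monotone nor submodular: there exist a workload and target distribution for which each of $\rho_1$ and $\rho_\infty$ fails to be monotone and fails to be submodular.
   Context: A workload $\mathbf{W}$ is a finite multiset of queries; a summary is $\mathbf{S}\subseteq\mathbf{W}$. There is a finite set $\mathbf{F}$ of features; for each query $q$ and feature $f$, $f(q)$ is a finite multiset of tokens. $f(\mathbf{S}) = \biguplus_{q\in\mathbf{S}} f(q)$, $\mathrm{dom}(\mathbf{S},f)$ is the set of distinct tokens in $f(\mathbf{S})$, $m_{\mathbf{S}}(t,f)$ the multiplicity of $t$ in $f(\mathbf{S})$, $\|\mathbf{S}\| = \sum_{q\in\mathbf{S}}\sum_f|f(q)|$, and $p_{\mathbf{S}}(t) = m_{\mathbf{S}}(t,f)/\|\mathbf{S}\|$ (tokens of distinct features regarded as distinct). For a target distribution $d$ on tokens of $\mathbf{W}$: $\rho_1(d) = 1 - \frac12\sum_f\sum_{t\in\mathrm{dom}(\mathbf{W},f)}|p_{\mathbf{S}}(t)-d(t)|$, $\rho_\infty(d) = 1-\max_f\max_{t\in\mathrm{dom}(\mathbf{W},f)}|p_{\mathbf{S}}(t)-d(t)|$. A set function $g$ is monotone if $A\subseteq B$ implies $g(A)\le g(B)$, and submodular if $g(A)+g(B)\ge g(A\cup B)+g(A\cap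 B)$. *)

(* Defs.v *)
From mathcomp Require Import all_boot all_order all_algebra.
Set Implicit Arguments. Unset Strict Implicit. Unset Printing Implicit Defensive.
Import Order.TTheory GRing.Theory Num.Theory.
Local Open Scope ring_scope.

(* A workload W is a finite multiset of queries: its elements are indexed by a
   finType Q (two copies of the same query are distinct elements of Q), and
   W is the whole of Q.  Features form a
   finType Fe; tokens range over a finType Tok; f(q) is the finite multiset of
   tokens [tok q f] (a sequence, considered up to permutation: only
   multiplicities and sizes are used).  Tokens of distinct features are
   regarded as distinct, so all quantities are indexed by pairs (f, t). *)

Section Repr.
Variables (R : realFieldType) (Q Fe Tok : finType).
Variable tok : Q -> Fe -> seq Tok.

Definition mult (S : {set Q}) (f : Fe) (t : Tok) : nat :=
  (\sum_(q in S) count_mem t (tok q f))%N.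

Definition wsize (S : {set Q}) : nat :=
  (\sum_(q in S) \sum_(f : Fe) size (tok q f))%N.

Definition indom (S : {set Q}) (f : Fe) (t : Tok) : bool := (0 < mult S f t)%N.

Definition prob (S : {set Q}) (f : Fe) (t : Tok) : R :=
  (mult S f t)%:R / (wsize S)%:R.

Definition is_target_distr (d : Fe -> Tok -> R) : Prop :=
  (forall f t, 0 <= d f t) /\
  (forall f t, ~~ indom [set: Q] f t -> d f t = 0) /\
  \sum_(f : Fe) \sum_(t | indom [set: Q] f t) d f t = 1.

Definition rho1 (d : Fe -> Tok -> R) (S : {set Q}) : R :=
  1 - 2^-1 * \sum_(f : Fe) \sum_(t | indom [set: Q] f t) `|prob S f t - d f t|.

Definition rhoinf (d : Fe -> Tok -> R) (S : {set Q}) : R :=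
  1 - \big[Num.max/0]_(f : Fe) \big[Num.max/0]_(t | indom [set: Q] f t)
        `|prob S f t - d f t|.
End Repr.

Definition monotone_ne (Q : finType) (R : realFieldType) (g : {set Q} -> R) : Prop :=
  forall A B : {set Q}, A != set0 -> A \subset B -> g A <= g B.

Definition submodular_ne (Q : finType) (R : realFieldType) (g : {set Q} -> R) : Prop :=
  forall A B : {set Q}, A :&: B != set0 ->
    g (A :|: B) + g (A :&: B) <= g A + g B.

(* Main.v *)
Require Import Defs.
From mathcomp Require Import all_boot all_order all_algebra.
From mathcomp Require Import lra.
Import Order.TTheory GRing.Theory Num.Theory.
Local Open Scope ring_scope.
Definition tk : 'I_4 -> unit -> seq bool := fun q _ => [:: ~~ odd q].
Definition sA1 : {set 'I_4} := [set x | val x \in [:: 0; 1]%N].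
Definition sB1 : {set 'I_4} := [set x | val x \in [:: 0; 1; 2]%N].
Definition sA : {set 'I_4} := [set x | val x \in [:: 0; 2]%N].
Definition sB : {set 'I_4} := [set x | val x \in [:: 0; 1; 3]%N].
Lemma big_unit' (R : Type) (idx : R) op (F : unit -> R) : \big[op/idx]_(f : unit) F f = op (F tt) idx.
Proof. by rewrite unlock /= /index_enum /= unlock /=. Qed.
Lemma big_bool' (R : Type) (idx : R) op (F : bool -> R) : \big[op/idx]_(f : bool | true) F f = op (F true) (op (F false) idx).
Proof. by rewrite unlock /= /index_enum /= unlock /=. Qed.
Ltac crunch := unfold indom, mult, wsize; rewrite ?big_unit' /= ?big_mkcond /= ?big_ord_recr ?big_ord0 /= ?inE /= ?big_mkcond /= ?big_ord_recr ?big_ord0 /= ?inE /= ?big_unit'.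
Lemma indomT t : indom tk [set: 'I_4] tt t. Proof. by case: t; crunch. Qed.
Section S.
Variable R : realFieldType.
Definition dd : unit -> bool -> R := fun _ _ => 2^-1.
Lemma rho1E S : rho1 tk dd S = 1 - 2^-1 * (`|prob R tk S tt true - 2^-1| + (`|prob R tk S tt false - 2^-1| + 0)).
Proof. rewrite /rho1 big_unit' addr0. under eq_bigl do rewrite indomT. by rewrite big_bool'. Qed.
Lemma rhoinfE S : rhoinf tk dd S = 1 - Num.max (Num.max `|prob R tk S tt true - 2^-1| (Num.max `|prob R tk S tt false - 2^-1| 0)) 0.
Proof. rewrite /rhoinf big_unit'. under eq_bigl do rewrite indomT. by rewrite big_bool'. Qed.

Ltac nrm := repeat first [rewrite ger0_norm; last by lra | rewrite ler0_norm; last by lra].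
Ltac mx1 := match goal with |- context [Num.max ?x ?y] =>
  lazymatch x with context [Num.max _ _] => fail | _ =>
  lazymatch y with context [Num.max _ _] => fail | _ =>
  first [rewrite (@max_l _ _ x y); last by lra | rewrite (@max_r _ _ x y); last by lra] end end end.
Ltac mx := repeat mx1.

Lemma pA1 : prob R tk sA1 tt true = 1/2 /\ prob R tk sA1 tt false = 1/2.
Proof. by rewrite /prob; split; crunch. Qed.
Lemma pB1 : prob R tk sB1 tt true = 2/3 /\ prob R tk sB1 tt false = 1/3.
Proof. by rewrite /prob; split; crunch. Qed.
Lemma pA : prob R tk sA tt true = 2%:R/2%:R /\ prob R tk sA tt false = 0%:R/2%:R.
Proof. by rewrite /prob; split; crunch. Qed.
Lemma pB : prob R tk sB tt true = 1/3 /\ prob R tk sB tt false = 2/3.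
Proof. by rewrite /prob; split; crunch. Qed.
Lemma pU : prob R tk (sA :|: sB) tt true = 2/4 /\ prob R tk (sA :|: sB) tt false = 2/4.
Proof. by rewrite /prob; split; crunch. Qed.
Lemma pI : prob R tk (sA :&: sB) tt true = 1%:R/1%:R /\ prob R tk (sA :&: sB) tt false = 0%:R/1%:R.
Proof. by rewrite /prob; split; crunch. Qed.

Lemma neA1 : sA1 != set0. Proof. apply/set0Pn; exists ord0; by rewrite !inE. Qed.
Lemma subAB1 : sA1 \subset sB1.
Proof. apply/subsetP => x; rewrite !inE; case: x => [[|[|[|[|?]]]] ?] //. Qed.
Lemma neI : sA :&: sB != set0. Proof. apply/set0Pn; exists ord0; by rewrite !inE. Qed.

Lemma rho1_nm : ~ monotone_ne (rho1 tk dd).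
Proof.
move=> H; have := H _ _ neA1 subAB1; rewrite !rho1E.
case: pA1 => -> ->; case: pB1 => -> ->; nrm; lra.
Qed.
Lemma rhoinf_nm : ~ monotone_ne (rhoinf tk dd).
Proof.
move=> H; have := H _ _ neA1 subAB1; rewrite !rhoinfE.
case: pA1 => -> ->; case: pB1 => -> ->; nrm; mx; lra.
Qed.
Lemma rho1_ns : ~ submodular_ne (rho1 tk dd).
Proof.
move=> H; have := H _ _ neI; rewrite !rho1E.
case: pA => -> ->; case: pB => -> ->; case: pU => -> ->; case: pI => -> ->; nrm; lra.
Qed.
Lemma rhoinf_ns : ~ submodular_ne (rhoinf tk dd).
Proof.
move=> H; have := H _ _ neI; rewrite !rhoinfE.
case: pA => -> ->; case: pB => -> ->; case: pU => -> ->; case: pI => -> ->; nrm; mx; lra.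
Qed.
Lemma dd_distr : is_target_distr tk dd.
Proof.
split; first by move=> ? ?; rewrite /dd invr_ge0 ler0n.
split; first by move=> [] t; rewrite indomT.
rewrite big_unit' addr0. under eq_bigl do rewrite indomT. rewrite big_bool' /dd; lra.
Qed.
End S.

Theorem lemma4p3 (R : realFieldType) :
  exists (Q Fe Tok : finType) (tok : Q -> Fe -> seq Tok) (d : Fe -> Tok -> R),
    is_target_distr tok d /\
    ~ monotone_ne (rho1 tok d) /\ ~ submodular_ne (rho1 tok d) /\
    ~ monotone_ne (rhoinf tok d) /\ ~ submodular_ne (rhoinf tok d).
Proof.
exists ('I_4 : finType), (unit : finType), (bool : finType), tk, (dd R).
split; first exact: dd_distr.
split; first exact: rho1_nm.
split; first exact: rho1_ns.
split; first exact: rhoinf_nm.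
exact: rhoinf_ns.
Qed.
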